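(* Let $T$ be a tree with vertex set $[n]=\{1,\dots,n\}$. Then the number of edges permitted by ${\bf oDFS}(T)$ equals the area $a(T)$.
   Context: Ordered depth-first search. For a connected graph $G$ on $[n]$, ${\bf oDFS}(G)$ is the procedure: set $\mathcal O_0=(1)$ (an ordered list, the ''stack'') and $\mathcal A_0=\emptyset$. For $i=0,1,\dots,n-1$: let $v_i$ be the first element of $\mathcal O_i$; let $\mathcal N_i$ be the set of neighbours of $v_i$ in $[n]\setminus(\mathcal A_i\cup\mathcal O_i)$; set $\mathcal A_{i+1}=\mathcal A_i\cup\{v_i\}$; form $\mathcal O_{i+1}$ by removing $v_i$ from the front of $\mathcal O_i$ and then placing the elements of $\mathcal N_i$, in increasing order, at the front of the remaining list. The depth-first walk is $X(i)=|\mathcal O_i|-1$ for $0\le i<n$. For a tree $T$ on $[n]$ (running ${\bf oDFS}(T)$), its area is $a(T)=\sum_{i=1}^{n-1}X(i)$. An edge $uv$ not in $T$ is permitted by ${\bf oDFS}(T)$ if there is $i\in\{0,\dots,n-1\}$ with $u,v\in\mathcal O_i$. *)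

(* Defs.v *)
From mathcomp Require Import all_boot.
Set Implicit Arguments. Unset Strict Implicit. Unset Printing Implicit Defensive.

(* Vertex set [n] = {1,...,n} is represented by 'I_n.+1 = {0,...,n} (vertex k+1
   of the paper is the ordinal k); n >= 1 since vertex 1 must exist.
   The relabelling is order preserving, so "increasing order" is unchanged. *)

Section ODFS.
Variable N : nat.
Notation V := 'I_N.+1.
Variable e : rel V.

Definition simple_graph := symmetric e /\ irreflexive e.
Definition connected_graph := forall x y : V, connect e x y.
Definition acyclic_graph :=
  forall (x : V) (s : seq V), uniq (x :: s) -> 2 <= size s -> path e x s ->
    ~~ e (last x s) x.
Definition is_tree := [/\ simple_graph, connected_graph & acyclic_graph].

(* one step of oDFS: state = (A_i, O_i) with A_i as a list, O_i the stack *)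
Definition odfs_step (st : seq V * seq V) : seq V * seq V :=
  let: (A, Os) := st in
  match Os with
  | [::] => st
  | v :: O' =>
      let Nv := [seq u <- enum V | e v u && (u \notin A) && (u \notin Os)] in
      (v :: A, Nv ++ O')
  end.

Definition odfs_state (i : nat) : seq V * seq V :=
  iter i odfs_step ([::], [:: ord0]).

Definition odfs_O (i : nat) : seq V := (odfs_state i).2.

Definition dfwalk (i : nat) : nat := (size (odfs_O i)).-1.

Definition area : nat := \sum_(1 <= i < N.+1) dfwalk i.

Definition permitted (u v : V) : bool :=
  [&& u != v, ~~ e u v & [exists i : 'I_N.+1, (u \in odfs_O i) && (v \in odfs_O i)]].

Definition num_permitted : nat :=
  #|[set p : V * V | (p.1 < p.2) && permitted p.1 p.2]|.

End ODFS.

(* Main.v *)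
Require Import Defs.
From mathcomp Require Import all_boot.
Set Implicit Arguments. Unset Strict Implicit. Unset Printing Implicit Defensive.

Section Proof.
Variable n : nat.
Notation V := 'I_n.+1.
Variable e : rel V.
Hypothesis esym : symmetric e.
Hypothesis eacyc : acyclic_graph e.

Definition Inv (st : seq V * seq V) : Prop :=
  let: (A, Os) := st in
  [/\ uniq (A ++ Os),
      (A = [::] /\ Os = [:: ord0]) \/ (forall w, w \in Os -> exists2 p, p \in A & e p w),
      (forall q p, q \in A -> p \in A -> exists r,
          [/\ path e q r, last q r = p, uniq (q :: r) & {subset r <= A}])
    & (forall a b, a \in Os -> b \in Os -> a != b -> ~~ e a b)].

Lemma inv_step st : Inv st -> Inv (odfs_step e st).
Proof.
case: st => A [|v O'] //=.
set Nv := [seq u <- enum V | _].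
move=> [U P2 P3 P4].
have memNv : forall u, (u \in Nv) = [&& e v u, u \notin A & u \notin v :: O'].
  by move=> u; rewrite mem_filter mem_enum andbT -andbA.
have uNv : uniq Nv by rewrite filter_uniq // enum_uniq.
have U' : uniq (Nv ++ A ++ v :: O').
  rewrite cat_uniq uNv U andbT /=; apply/hasPn => x.
  rewrite mem_cat => Hx; apply/negP; rewrite memNv => /and3P[_ h1 h2].
  by case/orP: Hx => H; [move: h1; rewrite H | move: h2; rewrite H].
have vA : v \notin A.
  by move: U; rewrite cat_uniq => /and3P[_ /hasPn H _]; exact: (H v (mem_head _ _)).
have vO : v \notin O' by move: U; rewrite cat_uniq => /and3P[_ _ /andP[]].
have AO : forall x, x \in A -> x \notin v :: O'.
  by move=> x xA; move: U; rewrite cat_uniq => /and3P[_ /hasPn H _]; apply/negP => xO; move: (H x xO); rewrite /= xA.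
split.
- change (uniq ((v :: A) ++ Nv ++ O')); rewrite (perm_uniq (permEl (perm_catCA (v :: A) Nv O'))).
  rewrite (perm_uniq (s2 := Nv ++ A ++ v :: O')) // perm_cat2l.
  exact: (permEl (perm_catCA [:: v] A O')).
- right=> w; rewrite mem_cat => /orP[wN|wO].
    by exists v; rewrite ?mem_head //; move: wN; rewrite memNv => /andP[].
  case: P2 => [[_ E]|H]; first by case: E => _ E'; rewrite E' in wO.
  by case: (H w); rewrite ?inE ?wO ?orbT // => p pA epw; exists p; rewrite // inE pA orbT.
- have parv : A != [::] -> exists2 p0, p0 \in A & e p0 v.
    move=> An; case: P2 => [[E _]|H]; first by rewrite E in An.
    exact: H v (mem_head _ _).
  have notinA : forall s : seq V, {subset s <= A} -> v \notin s := fun s H => contra (H v) vA.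
  move=> q p; rewrite !inE => /orP[/eqP->|qA] /orP[/eqP->|pA].
  + by exists [::]; split.
  + have [p0 p0A ep0v] : exists2 p0, p0 \in A & e p0 v.
      by apply: parv; apply/negP => /eqP E; rewrite E in pA.
    have [r [r1 r2 r3 r4]] := P3 _ _ p0A pA.
    exists (p0 :: r); split => //=.
    * by rewrite esym ep0v.
    * rewrite r3 andbT; apply: notinA => x; rewrite inE => /orP[/eqP->//|]; exact: r4.
    * by move=> x; rewrite !inE => /orP[/eqP->|/r4 xA]; rewrite ?p0A ?xA orbT.
  + have [p0 p0A ep0v] : exists2 p0, p0 \in A & e p0 v.
      by apply: parv; apply/negP => /eqP E; rewrite E in qA.
    have [r [r1 r2 r3 r4]] := P3 _ _ qA p0A.
    exists (rcons r v); split.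
    * by rewrite rcons_path r1 r2.
    * by rewrite last_rcons.
    * move/andP: r3 => [qr ur]; rewrite mem_rcons rcons_uniq inE negb_or qr ur !andbT.
      rewrite (notinA _ r4) andbT; apply/eqP => E; move: vA; by rewrite -E qA.
    * by move=> x; rewrite mem_rcons !inE => /orP[->|/r4->]; rewrite ?orbT.
  + have [r [r1 r2 r3 r4]] := P3 _ _ qA pA.
    by exists r; split => // x /r4 xA; rewrite inE xA orbT.
- have tri : forall a b, a \in Nv -> b \in Nv -> a != b -> ~~ e a b.
    move=> a' b' aN bN ab; apply/negP => eab.
    move: aN bN; rewrite !memNv => /and3P[eva _ aO] /and3P[evb _ bO].
    move: aO bO; rewrite !inE !negb_or => /andP[av _] /andP[bv _].
    have U3 : uniq [:: v; a'; b'].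
      by rewrite /= !inE !negb_or andbT (eq_sym v a') (eq_sym v b') av bv ab.
    have := eacyc U3 isT; rewrite /= eva eab esym evb /=; by move/(_ isT).
  have mix : forall a w, a \in Nv -> w \in O' -> ~~ e a w.
    move=> a' w aN wO; apply/negP => eaw.
    have [q qA eqw] : exists2 q, q \in A & e q w.
      case: P2 => [[_ E]|H]; first by case: E => _ E'; rewrite E' in wO.
      by apply: H; rewrite inE wO orbT.
    have [p0 p0A ep0v] : exists2 p0, p0 \in A & e p0 v.
      case: P2 => [[E _]|H]; first by rewrite E in qA.
      exact: H v (mem_head _ _).
    have [r [r1 r2 r3 r4]] := P3 _ _ qA p0A.
    move: aN; rewrite memNv => /and3P[eva aA aO].
    have wA : w \notin A by apply/negP => /AO; rewrite inE wO orbT.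
    have U5 : uniq (w :: (q :: r) ++ [:: v; a']).
      have qrA : {subset q :: r <= A} by move=> x; rewrite inE => /orP[/eqP->|/r4].
      rewrite cons_uniq mem_cat negb_or cat_uniq (contra (qrA w) wA) /= r3.
      rewrite (negbTE (contra (qrA v) vA)) (negbTE (contra (qrA a') aA)) /=.
      move: aO; rewrite !inE negb_or => /andP[av aO'].
      have wv : w != v by apply/eqP => E; move: vO; rewrite -E wO.
      have wa : w != a' by apply/eqP => E; move: aO'; rewrite -E wO.
      by rewrite negb_or wv wa (eq_sym v a') av.
    have sz : 1 < size ((q :: r) ++ [:: v; a']) by rewrite size_cat addn2.
    have := eacyc U5 sz; rewrite /= esym eqw cat_path r1 r2 /= ep0v eva last_cat r2 /=.
    by rewrite eaw; move/(_ isT).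
  move=> a b; rewrite !mem_cat => /orP[aN|aO] /orP[bN|bO] ab.
  + exact: tri.
  + exact: mix.
  + by rewrite esym; apply: mix.
  + by apply: P4; rewrite // inE ?aO ?bO orbT.
Qed.

Notation st := (odfs_state e).
Notation O := (odfs_O e).

Lemma stS i : st i.+1 = odfs_step e (st i).
Proof. by []. Qed.

Lemma inv_all i : Inv (st i).
Proof.
elim: i => [|i IH]; last by rewrite stS; apply: inv_step.
rewrite /odfs_state /=; split; [done|by left|by []|].
- by move=> a b; rewrite !inE => /eqP-> /eqP->; rewrite eqxx.
Qed.

Lemma uniqAO i : uniq ((st i).1 ++ O i).
Proof. by move: (inv_all i); rewrite /odfs_O; case: (st i) => A Os [] . Qed.

Lemma uniqO i : uniq (O i).
Proof. by move: (uniqAO i); rewrite cat_uniq => /and3P[]. Qed.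

Lemma nonadjO i a b : a \in O i -> b \in O i -> a != b -> ~~ e a b.
Proof. by move: (inv_all i); rewrite /odfs_O; case: (st i) => A Os [_ _ _ H]; apply: H. Qed.

Lemma size_inv i : O i = [::] \/ size (st i).1 = i.
Proof.
elim: i => [|i IH]; first by right.
rewrite /odfs_O stS; move: IH; rewrite /odfs_O.
case: (st i) => A [|v O'] /=; first by left.
by case => // E; right; rewrite E.
Qed.

Lemma O0 : O 0 = [:: ord0].
Proof. by []. Qed.

Lemma size_On : size (O n) <= 1.
Proof.
case: (size_inv n) => [->//|sA].
have U := uniqAO n.
have H := uniq_leq_size (s2 := enum V) U (fun x _ => mem_enum _ x).
have E : size (enum V) = n.+1 by rewrite size_enum_ord.
have H2 := leq_trans H (eq_leq E).
move: H2; rewrite size_cat sA => h.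
by rewrite -(leq_add2l n) addn1.
Qed.

Lemma OS_behead i : {subset behead (O i) <= O i.+1}.
Proof.
rewrite /odfs_O stS; case: (st i) => A [|v O'] //= x xO.
by rewrite mem_cat xO orbT.
Qed.

Lemma A_mono i k : {subset (st i).1 <= (st (k + i)).1}.
Proof.
elim: k => // k IH x /IH; rewrite addSn stS.
by case: (st (k + i)) => A [|v O'] //= xA; rewrite inE xA orbT.
Qed.

Lemma popped i k h O' : O i = h :: O' -> i < k -> h \notin O k.
Proof.
move=> Oi ik.
have hA : h \in (st i.+1).1.
  by move: Oi; rewrite /odfs_O stS; case: (st i) => A Os /= ->; rewrite mem_head.
have := A_mono (k - i.+1) hA; rewrite subnK //.
move=> hk; apply/negP => hO; move: (uniqAO k); rewrite cat_uniq => /and3P[_ /hasPn H _].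
by move: (H h hO); rewrite /= hk.
Qed.

Definition hd i : V := head ord0 (O i).
Definition f i (w : V) : V * V := if w < hd i then (w, hd i) else (hd i, w).
Definition S i : {set V * V} := f i @: [set w | w \in behead (O i)].

Lemma f_inj i : injective (f i).
Proof.
rewrite /f => w1 w2.
case: ltnP => h1; case: ltnP => h2 [] //; move=> E1 E2; by rewrite ?E1 ?E2.
Qed.

Lemma cardS i : #|S i| = dfwalk e i.
Proof.
rewrite /S card_imset; last exact: f_inj.
rewrite cardsE /dfwalk -size_behead; apply/card_uniqP.
by move: (uniqO i); case: (O i) => //= x s /andP[].
Qed.

Lemma memS i p : p \in S i ->
  exists O', [/\ O i = hd i :: O', p.1 \in O i, p.2 \in O i, p.1 < p.2
                 & (p.1 == hd i) || (p.2 == hd i)].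
Proof.
case/imsetP => w; rewrite inE => wb ->.
have [O' EO] : exists O', O i = hd i :: O'.
  by rewrite /hd; move: wb; case: (O i) => // x s _; exists s.
have wO : w \in O i by rewrite EO inE; rewrite EO /= in wb; rewrite wb orbT.
have hO : hd i \in O i by rewrite EO mem_head.
have wh : w != hd i.
  apply/eqP => E; move: (uniqO i); rewrite EO /= => /andP[/negP H _]; apply: H.
  by rewrite -E; rewrite EO /= in wb.
exists O'; rewrite /f; case: ltnP => hw /=; split; rewrite ?eqxx ?orbT //.
by rewrite ltn_neqAle hw andbT eq_sym.
Qed.

Lemma S_perm i p : 0 < i -> i <= n -> p \in S i -> (p.1 < p.2) && permitted e p.1 p.2.
Proof.
move=> i0 iN pS; have [O' [EO h1 h2 lt _]] := memS pS.
rewrite lt /permitted /=.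
have neq : p.1 != p.2 by apply/eqP => E; move: lt; rewrite E ltnn.
rewrite neq (nonadjO h1 h2 neq) /=.
have iN' : i < n.+1 by [].
by apply/existsP; exists (Ordinal iN'); rewrite /= h1 h2.
Qed.

Lemma S_lt i k p : i < k -> p \in S i -> p \in S k -> False.
Proof.
move=> ik pi pk.
have [O' [EO _ _ _ hh]] := memS pi.
have [O'' [_ k1 k2 _ _]] := memS pk.
have := popped EO ik.
by case/orP: hh => /eqP <-; rewrite ?k1 ?k2.
Qed.

Lemma S_uniq i k p : p \in S i -> p \in S k -> i = k.
Proof.
move=> pi pk; case: (ltngtP i k) => // ik.
- by case: (S_lt ik pi pk).
- by case: (S_lt ik pk pi).
Qed.

Lemma size1 (s : seq V) u v : size s <= 1 -> u \in s -> v \in s -> u = v.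
Proof.
case: s => [|x [|y s]] //= _; rewrite !inE => /eqP -> /eqP -> //.
Qed.

Lemma step_or k u v : u \in O k -> v \in O k -> u < v ->
  ((0 < k) && ((u, v) \in S k)) \/ (u \in O k.+1 /\ v \in O k.+1).
Proof.
move=> uO vO uv.
have k0 : 0 < k.
  case: k uO vO => [|k] // uO vO.
  have E : u = v by apply: (size1 _ uO vO); rewrite O0.
  by move: uv; rewrite E ltnn.
have sub : forall w, w \in behead (O k) -> w \in O k.+1 by move=> w; apply: OS_behead.
move: sub; rewrite /S /f /hd.
case: (O k) uO vO => [|h O'] // uO vO sub /=.
move: uO vO; rewrite !inE.
case: (eqVneq u h) => [uh|uh] /=.
- move=> _ vO; left; rewrite k0 /=; apply/imsetP; exists v.
  + rewrite inE; case/orP: vO => [/eqP vh|] //.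
    by move: uv; rewrite uh vh ltnn.
  + by rewrite -uh ltnNge (ltnW uv).
- case: (eqVneq v h) => [vh|vh] /= uO' vO'.
  + left; rewrite k0 /=; apply/imsetP; exists u; first by rewrite inE.
    by rewrite -vh uv.
  + by right; split; apply: sub.
Qed.

Lemma P_S d : forall k (u v : V), k + d = n -> u \in O k -> v \in O k -> u < v ->
  exists2 i, (0 < i) && (i <= n) & (u, v) \in S i.
Proof.
elim: d => [|d IH] k u v kd uO vO uv.
all: have kn : k <= n by rewrite -kd leq_addr.
all: case: (step_or uO vO uv) => [/andP[k0 kS]|[uO' vO']];
  first by exists k; rewrite ?k0 ?kn.
- move: kd; rewrite addn0 => kd.
  subst k; have E : u = v by apply: (size1 size_On uO vO).
  by move: uv; rewrite E ltnn.
- by apply: (IH k.+1) => //; rewrite addSnnS.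
Qed.

Lemma sum_has (r : seq nat) (b : nat -> bool) : uniq r ->
  (forall i k, i \in r -> k \in r -> b i -> b k -> i = k) ->
  \sum_(i <- r) b i = has b r.
Proof.
elim: r => [|x r IH]; first by rewrite big_nil.
rewrite big_cons /= => /andP[xr ur] H.
rewrite IH //; last by move=> i k ir kr; apply: H; rewrite inE ?ir ?kr orbT.
case bx: (b x) => //=.
case hr: (has b r) => //.
case/hasP: hr => y yr by_.
have E : x = y by apply: H; rewrite ?inE ?eqxx ?yr ?orbT.
by move: xr; rewrite E yr.
Qed.

Lemma main : num_permitted e = area e.
Proof.
rewrite /num_permitted /area.
set P := [set p : V * V | (p.1 < p.2) && permitted e p.1 p.2].
have E1 : forall i, dfwalk e i = \sum_(p : V * V) (p \in S i).
  move=> i; rewrite -cardS -sum1_card big_mkcond /=.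
  by apply: eq_bigr => p _; case: (p \in S i).
rewrite (eq_bigr _ (fun i _ => E1 i)) exchange_big /=.
rewrite -sum1_card big_mkcond /=; apply: eq_bigr => p _.
rewrite sum_has ?iota_uniq //; last first.
  by move=> i k _ _; apply: S_uniq.
suff -> : has (fun i => p \in S i) (index_iota 1 n.+1) = (p \in P) by case: (p \in P).
case pP: (p \in P).
- apply/hasP; move: pP; rewrite inE; case: p => u v /= /andP[uv /and3P[_ _ /existsP[i /andP[uO vO]]]].
  have [j /andP[j0 jn] jS] := P_S (k := i) (d := n - i) (subnKC (ltn_ord i : i <= n)) uO vO uv.
  by exists j; rewrite ?mem_index_iota ?j0 /= ?ltnS.
- apply/negbTE/hasPn => i; rewrite mem_index_iota => /andP[i0 iN]; apply/negP => pS.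
  by move: pP; rewrite inE (S_perm i0 _ pS).
Qed.

End Proof.

Theorem lemma1 (n : nat) (e : rel 'I_n.+1) :
  is_tree e -> num_permitted e = area e.
Proof.
by case=> [[es _] _ ea]; apply: main.
Qed.
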